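(* For all $n>0$ and all lattice paths $P$ from $(0,0)$ to $(n,n)$ with unit north and east steps, $\mathrm{word}(\phi_{\mathrm{LW}}(P))=\mathrm{sw}^-_{1,-1}(\mathrm{word}(P))$.
   Context: Words over $\{\mathrm{N},\mathrm{E}\}$ are identified with lattice paths from $(0,0)$ (N = unit north step, E = unit east step); $\mathrm{word}(P)$ is the word of a path $P$, and $\mathrm{rev}$ reverses a word. The levels of a word $w=w_1\cdots w_n$ for $\mathrm{sw}^-_{1,-1}$ are $l_0=0$, $l_i=l_{i-1}+1$ if $w_i=\mathrm{N}$, $l_i=l_{i-1}-1$ if $w_i=\mathrm{E}$. $\mathrm{sw}^-_{1,-1}(w)$ is obtained by: for $k=-1,-2,\ldots$ and then $k=\ldots,2,1,0$ (all negative values in decreasing order, then all nonnegative values in decreasing order), scan $w$ from right to left and append each letter $w_i$ ($i\ge1$) with $l_i=k$. For a path $P$ from $(0,0)$ to $(n,n)$, its area vector is $g(P)=(g_0,\ldots,g_{n-1})$ where $g_i+n-i$ is the number of complete unit squares in the strip $\{(x,y):x\ge0,\ i\le y\le i+1\}$ lying to the right of $P$ and to the left of the line $x=n$. For each integer $i$, let $z^{(i)}$ be the subsequence of $g(P)$ consisting of all entries equal to $i$ or $i-1$, and let $\sigma^{(i)}$ be obtained by replacing each $i$ by $\mathrm{E}$ and each $i-1$ by $\mathrm{N}$. For $i\ge0$ let $\tau^{(i)}=\mathrm{rev}(\sigma^{(i)})$. For $i<0$, $\sigma^{(i)}$ (when nonempty) ends in $\mathrm{E}$; writing $\sigma^{(i)}=\tilde\sigma^{(i)}\mathrm{E}$,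 let $\tau^{(i)}=\mathrm{rev}(\tilde\sigma^{(i)})\mathrm{E}$ (and $\tau^{(i)}$ empty if $\sigma^{(i)}$ is empty). Then $\phi_{\mathrm{LW}}(P)$ is the path with word $\tau^{(-1)}\tau^{(-2)}\cdots\tau^{(-n)}\tau^{(n)}\cdots\tau^{(2)}\tau^{(1)}\tau^{(0)}$. *)

(* Defs.v *)
From HB Require Import structures.
From mathcomp Require Import all_boot all_order all_algebra.
Set Implicit Arguments. Unset Strict Implicit. Unset Printing Implicit Defensive.
Import Order.TTheory GRing.Theory Num.Theory.
Local Open Scope ring_scope.

(* Letters: N = unit north step, E = unit east step. *)
Inductive step := N | E.

Definition step_eqb (a b : step) : bool :=
  match a, b with N, N | E, E => true | _, _ => false end.
Lemma step_eqP : Equality.axiom step_eqb.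
Proof. by case; case; constructor. Qed.
HB.instance Definition _ := hasDecEq.Build step step_eqP.

(* A word over {N,E}; a lattice path from (0,0) is identified with its word,
   so word(P) = P.  A path ends at (n,n) iff it has n N's and n E's. *)
Definition word := seq step.

Definition level (w : word) (i : nat) : int :=
  (count_mem N (take i w))%:Z - (count_mem E (take i w))%:Z.

Definition sw_pass (w : word) (k : int) : word :=
  rev [seq nth N w i.-1 | i <- iota 1 (size w) & level w i == k].

(* k = -1, -2, ..., -|w| (all possible negative levels, decreasing),
   then k = |w|, ..., 1, 0 (all possible nonnegative levels, decreasing). *)
Definition sw_m11 (w : word) : word :=
  flatten [seq sw_pass w (- (j%:Z)) | j <- iota 1 (size w)] ++
  flatten [seq sw_pass w (j%:Z) | j <- rev (iota 0 (size w).+1)].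

(* x-coordinates of the north steps of a path, in order (e = current x). *)
Fixpoint north_xs (e : nat) (w : word) : seq nat :=
  match w with
  | [::] => [::]
  | N :: w' => e :: north_xs e w'
  | E :: w' => north_xs e.+1 w'
  end.

(* number of complete unit squares in the strip i <= y <= i+1 to the right
   of P and to the left of x = n: those with left side x >= x-coordinate of
   the north step of P in that strip. *)
Definition squares_right (n : nat) (w : word) (i : nat) : nat :=
  n - nth 0 (north_xs 0 w) i.

(* area vector g(P) = (g_0,...,g_{n-1}), g_i + (n - i) = squares_right i *)
Definition area_vector (n : nat) (w : word) : seq int :=
  [seq (squares_right n w i)%:Z - (n - i)%:Z | i <- iota 0 n].

Definition sigma_LW (g : seq int) (i : int) : word :=
  [seq (if x == i then E else N) | x <- g & (x == i) || (x == i - 1)].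

(* For i < 0, sigma = tilde_sigma E and tau = rev(tilde_sigma) E; we split off
   the last letter of sigma (which the paper asserts is E). *)
Definition tau_LW (g : seq int) (i : int) : word :=
  let s := sigma_LW g i in
  if 0 <= i then rev s
  else if s is [::] then [::]
  else rev (take (size s).-1 s) ++ [:: last N s].

Definition phi_LW (n : nat) (w : word) : word :=
  let g := area_vector n w in
  flatten [seq tau_LW g (- (j%:Z)) | j <- iota 1 n] ++
  flatten [seq tau_LW g (j%:Z) | j <- rev (iota 0 n.+1)].

(* Main.v *)
Require Import Defs.
From mathcomp Require Import all_boot all_order all_algebra zify.
Set Implicit Arguments. Unset Strict Implicit. Unset Printing Implicit Defensive.
Import Order.TTheory GRing.Theory Num.Theory.
Local Open Scope ring_scope.

Definition stp (c : step) : int := if c is N then 1 else -1.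
Fixpoint swl (k h : int) (w : word) : word :=
  match w with [::] => [::]
  | c :: w' => (if h + stp c == k then [:: c] else [::]) ++ swl k (h + stp c) w' end.
Fixpoint sigU (k h : int) (w : word) : word :=
  match w with [::] => [::]
  | N :: w' => (if h == k then [:: E] else if h == k - 1 then [:: N] else [::]) ++ sigU k (h + stp N) w'
  | E :: w' => sigU k (h + stp E) w' end.
Fixpoint endl (h : int) (w : word) : int :=
  match w with [::] => h | c :: w' => endl (h + stp c) w' end.

Lemma pos_case k w h : endl h w <= k ->
  (h <= k -> sigU k h w = swl k h w) /\ (k < h -> swl k h w = E :: sigU k h w).
Proof.
elim: w h => [|c w IH] h /=.
  move=> hk; split=> // hlt; lia.
case: c => /= hend; have [IH1 IH2] := IH _ hend; split=> hk.
- have [Hh|hne] := eqVneq h k; first subst h.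
    rewrite ifN; last by apply/eqP; lia.
    by rewrite /= IH2 //; lia.
  have [Hh|hne2] := eqVneq h (k-1); first subst h.
    rewrite ifT; last by apply/eqP; lia.
    by rewrite /= IH1 //; lia.
  rewrite ifN; last by apply/eqP; lia.
  by rewrite /= IH1 //; lia.
- rewrite ifN; last by apply/eqP; lia.
  rewrite ifN; last by apply/eqP; lia.
  rewrite ifN; last by apply/eqP; lia.
  by rewrite /= IH2 //; lia.
- rewrite ifN; last by apply/eqP; lia.
  by rewrite /= IH1 //; lia.
- have [Hk|Hk] := eqVneq (h + -1) k.
    by rewrite /= IH1 // Hk.
  by rewrite /= IH2 //; lia.
Qed.

Lemma neg_case k w h : k < endl h w ->
  (h <= k -> sigU k h w = rcons (swl k h w) E) /\ (k < h -> E :: sigU k h w = rcons (swl k h w) E).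
Proof.
elim: w h => [|c w IH] h /=.
  move=> hk; split=> hlt //; lia.
case: c => /= hend; have [IH1 IH2] := IH _ hend; split=> hk.
- have [Hh|hne] := eqVneq h k; first subst h.
    rewrite ifN; last by apply/eqP; lia.
    by rewrite /= IH2 //; lia.
  have [Hh|hne2] := eqVneq h (k-1); first subst h.
    rewrite ifT; last by apply/eqP; lia.
    by rewrite /= IH1 //; lia.
  rewrite ifN; last by apply/eqP; lia.
  by rewrite /= IH1 //; lia.
- rewrite ifN; last by apply/eqP; lia.
  rewrite ifN; last by apply/eqP; lia.
  rewrite ifN; last by apply/eqP; lia.
  by rewrite /= IH2 //; lia.
- rewrite ifN; last by apply/eqP; lia.
  by rewrite /= IH1 //; lia.
- have [Hk|Hk] := eqVneq (h + -1) k.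
    by rewrite /= IH1 // Hk.
  by rewrite /= IH2 //; lia.
Qed.

Lemma level0 w : level w 0 = 0.
Proof. by rewrite /level take0. Qed.

Lemma levelS c w i : level (c :: w) i.+1 = stp c + level w i.
Proof. rewrite /level /=; case: c => /=; rewrite ?add0n ?add1n /=; lia. Qed.

Lemma swl_iota k w h :
  [seq nth N w i.-1 | i <- iota 1 (size w) & h + level w i == k] = swl k h w.
Proof.
elim: w h => [|c w IH] h //=.
rewrite levelS level0 addr0 -(IH (h + stp c)) (iotaDl 1 1).
have H : [seq nth N (c :: w) i.-1 | i <- [seq i <- [seq (1 + i)%N | i <- iota 1 (size w)]
    | h + level (c :: w) i == k]] = [seq nth N w i.-1 | i <- iota 1 (size w) & h + stp c + level w i == k].
  rewrite filter_map -map_comp (eq_filter (a2 := fun i => h + stp c + level w i == k)); last by move=> i /=; rewrite add1n levelS addrA.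
  apply/eq_in_map => i; rewrite mem_filter mem_iota => /andP[_ /andP[hi _]] /=. by case: i hi.
by case: ifP => _; rewrite /= H.
Qed.

Fixpoint gv (a e : nat) (w : word) : seq int :=
  match w with [::] => [::]
  | N :: w' => (a%:Z - e%:Z) :: gv a.+1 e w'
  | E :: w' => gv a e.+1 w' end.

Lemma sigma_gv k w a e h : h = a%:Z - e%:Z -> sigma_LW (gv a e w) k = sigU k h w.
Proof.
elim: w a e h => [|c w IH] a e h -> //.
case: c => /=.
  rewrite -(IH a.+1 e); last by lia.
  rewrite /sigma_LW /=.
  case: (eqVneq (a%:Z - e%:Z) k) => [->|H1] /=; first by rewrite eqxx.
  by case: ifP => /= H2; rewrite ?(negPf H1).
by rewrite (IH a e.+1 (a%:Z - e%:Z + stp E)) //=; lia.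
Qed.

Lemma gv_eq w a e : gv a e w =
  [seq (a + i)%N%:Z - (nth 0%N (north_xs e w) i)%:Z | i <- iota 0 (count_mem N w)].
Proof.
elim: w a e => [|c w IH] a e //=.
case: c => /=; last by rewrite IH.
rewrite addn0 add0n IH (iotaDl 1 0) -map_comp; congr (_ :: _).
by apply/eq_map => i /=; rewrite addSnnS.
Qed.

Lemma north_xs_size w e : size (north_xs e w) = count_mem N w.
Proof. by elim: w e => [|c w IH] e //=; case: c => /=; rewrite IH. Qed.

Lemma north_xs_le w e x : x \in north_xs e w -> (x <= e + count_mem E w)%N.
Proof.
elim: w e => [|c w IH] e //=; case: c => /=.
  by rewrite inE add0n => /orP[/eqP->|/IH] //; rewrite leq_addr.
by move=> /IH; rewrite add1n addSnnS.
Qed.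

Lemma area_gv n w : count_mem N w = n -> count_mem E w = n -> area_vector n w = gv 0 0 w.
Proof.
move=> hN hE; rewrite gv_eq hN /area_vector.
apply/eq_in_map => i; rewrite mem_iota => /andP[_ hi].
have : nth 0%N (north_xs 0 w) i \in north_xs 0 w by rewrite mem_nth // north_xs_size hN.
move=> /north_xs_le; rewrite hE add0n /squares_right => hx.
rewrite add0n in hi *; rewrite /squares_right -[nth 0%N _ i]/(nth 0%N (north_xs 0 w) i) in hx *.
move: hx; rewrite -[((north_xs 0 w)`_i)%R]/(nth 0%N (north_xs 0 w) i); lia.
Qed.

Lemma endl_eq w h : endl h w = h + (count_mem N w)%:Z - (count_mem E w)%:Z.
Proof. by elim: w h => [|c w IH] h /=; [lia | rewrite IH; case: c => /=; lia]. Qed.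

Lemma sw_pass_swl P k : sw_pass P k = rev (swl k 0 P).
Proof.
by rewrite /sw_pass -swl_iota; congr (rev (map _ _)); apply: eq_filter => i; rewrite add0r.
Qed.

Lemma level_tau n P k : count_mem N P = n -> count_mem E P = n ->
  tau_LW (area_vector n P) k = sw_pass P k.
Proof.
move=> hN hE; rewrite (area_gv hN hE) sw_pass_swl /tau_LW (sigma_gv k P (h := 0)) //.
have hend : endl 0 P = 0 by rewrite endl_eq hN hE; lia.
case: (lerP 0 k) => hk.
  have [H _] := pos_case (w := P) (h := 0) (k := k) (ltac:(by rewrite hend)).
  by rewrite H.
have [_ H] := neg_case (w := P) (h := 0) (k := k) (ltac:(by rewrite hend)).
move: (H hk); case/lastP: (sigU k 0 P) => [|t x].
  by move=> /(congr1 size); rewrite size_rcons /=; case: (swl k 0 P).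
rewrite -rcons_cons => /eqP; rewrite eqseq_rcons => /andP[/eqP <- /eqP ->].
case: t => [|y t] //=; rewrite last_rcons size_rcons -[(size t).+1]/(size (y :: t)) -rcons_cons -cats1 take_size_cat // [rev (E :: _)]rev_cons cats1.
done.
Qed.

Lemma count_take_le (x : step) i (P : word) : (count_mem x (take i P) <= count_mem x P)%N.
Proof. by rewrite -{2}(cat_take_drop i P) count_cat leq_addr. Qed.

Lemma sw_empty n P k : count_mem N P = n -> count_mem E P = n ->
  (n%:Z < k) || (k < - n%:Z) -> sw_pass P k = [::].
Proof.
move=> hN hE hk; rewrite /sw_pass.
rewrite (eq_filter (a2 := pred0)) ?filter_pred0 // => i /=.
apply/negbTE/eqP => hl; move: hk; rewrite -hl /level.
have := count_take_le N i P; have := count_take_le E i P; rewrite hN hE.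
lia.
Qed.

Lemma flatten_nil (T : Type) (f : nat -> seq T) s :
  (forall x, x \in s -> f x = [::]) -> flatten [seq f x | x <- s] = [::].
Proof. by elim: s => //= x s IH H; rewrite H ?inE ?eqxx // IH // => y hy; rewrite H // inE hy orbT. Qed.

Lemma size_NE (P : word) : size P = (count_mem N P + count_mem E P)%N.
Proof. by elim: P => //= c P ->; case: c => /=; lia. Qed.

Local Close Scope ring_scope.

Theorem mainTheorem4 (n : nat) (P : word) :
  (0 < n)%N -> count_mem N P = n -> count_mem E P = n ->
  phi_LW n P = sw_m11 P.
Proof.
move=> _ hN hE; rewrite /phi_LW /sw_m11 size_NE hN hE.
rewrite iotaD map_cat flatten_cat (@flatten_nil _ _ (iota (1 + n) n)); last first.
  move=> x; rewrite mem_iota => hx; apply: (sw_empty hN hE); apply/orP; right; lia.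
rewrite -addSn iotaD rev_cat map_cat flatten_cat (@flatten_nil _ _ (rev (iota n.+1 n))); last first.
  move=> x; rewrite mem_rev mem_iota => hx; apply: (sw_empty hN hE); apply/orP; left; lia.
rewrite cats0 /=.
congr (flatten _ ++ flatten _); apply: eq_map => j; exact: level_tau.
Qed.
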